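(* Let $u\ge1$ be an integer, $H$ a graph with $\mathrm{dom}(H)\ge u$, and $\Delta\ge\omega\ge\omega_0(H^{\downarrow u})+u$ with $\omega-u$ dividing $\Delta$. Let $L=\mathrm{T}_\omega(\frac{\omega\Delta}{\omega-u})$, and for $p\ge1$ write $p=q\,k^u(L)+r$ with integers $q\ge 0$, $0\le r<k^u(L)$. Then \[ \lim_{p\to\infty}\frac{\mathrm{ex}_u(p,H,\{K_u\vee I_{\Delta+1},K_{\omega+1}\})}{\mathcal{N}(H,qL\cup rK_u)}=1,\qquad \lim_{p\to\infty}\frac{\mathrm{ex}_u(p,H,\{K_u\vee I_{\Delta+1},K_{\omega+1}\})}{\frac{\mathcal{N}(H,L)}{k^u(L)}p}=1, \] and whenever $k^u(L)$ divides $p$, $\mathrm{ex}_u(p,H,\{K_u\vee I_{\Delta+1},K_{\omega+1}\})=\mathcal{N}\big(H,\frac{p}{k^u(L)}L\big)$.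
   Context: All graphs are finite and simple. $\mathcal{N}(H,G)$ is the number of (not necessarily induced) subgraphs of $G$ isomorphic to $H$; $k^u(G)=\mathcal{N}(K_u,G)$. $\mathrm{T}_r(n)$ is the Turán graph (complete $r$-partite on $n$ vertices with part sizes $\lfloor n/r\rfloor$ or $\lceil n/r\rceil$). $K_u\vee I_{\Delta+1}$ is the complete split graph: a $u$-clique, an independent set of $\Delta+1$ vertices, and all edges between them. $qL\cup rK_u$ is the disjoint union of $q$ copies of $L$ and $r$ copies of $K_u$; $aL$ is the disjoint union of $a$ copies of $L$. A dominating vertex of $H$ is one adjacent to all other vertices; $\mathrm{dom}(H)$ is their number; $H^{\downarrow u}$ is $H$ with $u$ dominating vertices deleted. For a graph $J$, $\omega_0(J)$ is the least positive integer such that for every integer $r\ge\omega_0(J)$ and every $n\ge1$, every $n$-vertex $K_{r+1}$-free graph $G$ satisfies $\mathcal{N}(J,G)\le\mathcal{N}(J,\mathrm{T}_r(n))$ (it exists by a theorem of Morrison et al.). $\mathrm{ex}_u(p,H,\mathcal{F})\in[0,\infty]$ is the supremum of $\mathcal{N}(H,G)$ over graphs $G$ with $k^u(G)=p$ having no subgraph isomorphic to a member of $\mathcal{F}$. *)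

(* Defs.v *)
From HB Require Import structures.
From mathcomp Require Import all_boot all_order all_algebra.
From mathcomp Require Import all_classical all_reals all_analysis.

Set Implicit Arguments.
Unset Strict Implicit.
Unset Printing Implicit Defensive.

Import Order.TTheory GRing.Theory Num.Theory.

Record graph := Graph {
  gn : nat;
  gadj : 'I_gn -> 'I_gn -> bool;
  gadj_sym : forall x y, gadj x y = gadj y x;
  gadj_irr : forall x, gadj x x = false }.

(* (W, F) is a (not necessarily induced) subgraph of G with vertex set W and
   edge set F (F given as a set of ordered pairs), isomorphic to H. *)
Definition is_copy (H G : graph) (W : {set 'I_(gn G)})
  (F : {set 'I_(gn G) * 'I_(gn G)}) : bool :=
  [&& F \subset [set e | gadj e.1 e.2], F \subset finset.setX W W &
   [exists f : {ffun 'I_(gn H) -> 'I_(gn G)},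
     [&& injectiveb f, f @: setT == W &
      [forall i, forall j, gadj i j == ((f i, f j) \in F)]]]].

Definition Ncopies (H G : graph) : nat :=
  #|[set WF : {set 'I_(gn G)} * {set 'I_(gn G) * 'I_(gn G)} |
       @is_copy H G WF.1 WF.2]|.

Definition K (n : nat) : graph.
Proof.
refine (@Graph n (fun i j => i != j) _ _).
- by move=> x y; rewrite eq_sym.
- by move=> x; rewrite eqxx.
Defined.

Definition kcl (u : nat) (G : graph) : nat := Ncopies (K u) G.

(* Turan graph T_r(n): vertex i lies in part (i mod r); parts have sizes
   floor(n/r) or ceil(n/r). *)
Definition T (r n : nat) : graph.
Proof.
refine (@Graph n (fun i j => (i %% r != j %% r)%N) _ _).
- by move=> x y; rewrite eq_sym.
- by move=> x; rewrite eqxx.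
Defined.

(* complete split graph K_u \/ I_m : vertices < u form the clique,
   the other m vertices the independent set. *)
Definition KI (u m : nat) : graph.
Proof.
refine (@Graph (u + m) (fun i j => (i != j) && ((i < u)%N || (j < u)%N)) _ _).
- by move=> x y; rewrite eq_sym orbC.
- by move=> x; rewrite eqxx.
Defined.

Definition gunion_adj (G1 G2 : graph) (x y : 'I_(gn G1 + gn G2)) : bool :=
  match fintype.split x, fintype.split y with
  | inl a, inl b => gadj a b
  | inr a, inr b => gadj a b
  | _, _ => false
  end.

Definition gunion (G1 G2 : graph) : graph.
Proof.
refine (@Graph (gn G1 + gn G2) (@gunion_adj G1 G2) _ _).
- move=> x y; rewrite /gunion_adj.
  by case: (fintype.split x) => a; case: (fintype.split y) => b //; rewrite gadj_sym.
- by move=> x; rewrite /gunion_adj; case: (fintype.split x) => a; rewrite gadj_irr.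
Defined.

Fixpoint copies (a : nat) (L : graph) : graph :=
  match a with
  | 0 => K 0
  | a'.+1 => gunion (copies a' L) L
  end.

Definition dominating (G : graph) (v : 'I_(gn G)) : bool :=
  [forall w, (w != v) ==> gadj v w].
Arguments dominating : clear implicits.

Definition dom (G : graph) : nat := #|[set v | dominating G v]|.

Definition induced (G : graph) (S : {set 'I_(gn G)}) : graph.
Proof.
refine (@Graph #|S| (fun i j => gadj (enum_val i) (enum_val j)) _ _).
- by move=> x y; rewrite gadj_sym.
- by move=> x; rewrite gadj_irr.
Defined.

(* H^{down u}: delete u dominating vertices (the u smallest-indexed ones;
   the result does not depend on the choice up to isomorphism). *)
Definition Hdown (G : graph) (u : nat) : graph :=
  @induced G (~: [set v | dominating G v &&
                 (#|[set w | dominating G w & (val w < val v)%N]| < u)%N]).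

Definition free (F G : graph) : Prop := Ncopies F G = 0.

(* The property defining omega_0(J): for every r >= m and every n >= 1,
   every n-vertex K_{r+1}-free G satisfies N(J,G) <= N(J,T_r(n)). *)
Definition turan_prop (J : graph) (m : nat) : Prop :=
  forall r, (m <= r)%N -> forall G : graph, (1 <= gn G)%N ->
    free (K r.+1) G -> (Ncopies J G <= Ncopies J (T r (gn G)))%N.

Definition is_omega0 (J : graph) (w : nat) : Prop :=
  [/\ (0 < w)%N, turan_prop J w &
      forall w', (0 < w')%N -> turan_prop J w' -> (w <= w')%N].

Fixpoint inlist (F : graph) (Fs : seq graph) : Prop :=
  match Fs with [::] => False | F' :: Fs' => F = F' \/ inlist F Fs' end.

Definition ex_u (R : realType) (u p : nat) (H : graph) (Fs : seq graph)
  : \bar R :=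
  ereal_sup ((fun G => ((Ncopies H G)%:R : R)%:E) @`
     [set G : graph | kcl u G = p /\ forall F, inlist F Fs -> free F G]).

(* Main.v *)
Require Import Defs.
From HB Require Import structures.
From mathcomp Require Import all_boot all_order all_algebra.
From mathcomp Require Import all_classical all_reals all_analysis.
From mathcomp Require Import zify ring lra.
Import Order.TTheory GRing.Theory Num.Theory.
Set Implicit Arguments. Unset Strict Implicit. Unset Printing Implicit Defensive.
Import fintype finset.
Local Notation inE := finset.inE.
Local Notation in_setX := finset.in_setX.
Local Notation subsetT := finset.subsetT.
Local Notation setP := finset.setP.
Lemma inT (T : Type) (x : T) : x \in (setT : set T).
Proof. exact: classical_sets.in_setT. Qed.
Local Notation set0 := finset.set0.
Definition homs (J G : graph) : {set {ffun 'I_(gn J) -> 'I_(gn G)}} :=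
  [set f : {ffun _ -> _} | injectiveb f && [forall i, forall j, gadj i j ==> gadj (f i) (f j)]].
Definition hom J G := #|homs J G|.

Lemma homsP J G (f : {ffun 'I_(gn J) -> 'I_(gn G)}) :
  reflect (injective f /\ forall i j, gadj i j -> gadj (f i) (f j)) (f \in homs J G).
Proof.
rewrite inE; apply: (iffP andP) => [[/injectiveP Hi /forallP Ha]|[Hi Ha]].
  split=> // i j Hij; move/forallP: (Ha i) => /(_ j); by rewrite Hij.
split; first by apply/injectiveP.
apply/forallP => i; apply/forallP => j; apply/implyP; exact: Ha.
Qed.

Definition fcomp (A B C : finType) (g : B -> C) (f : {ffun A -> B}) : {ffun A -> C} :=
  [ffun i => g (f i)].

Lemma hom_mono J G1 G2 (phi : 'I_(gn G1) -> 'I_(gn G2)) :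
  injective phi -> (forall x y, gadj x y -> gadj (phi x) (phi y)) ->
  (hom J G1 <= hom J G2)%N.
Proof.
move=> Hi Ha; rewrite /hom -(@card_imset _ _ (@fcomp _ _ _ phi) (homs J G1)).
  apply: subset_leq_card; apply/subsetP => _ /imsetP[f /homsP[fi fa] ->].
  apply/homsP; split.
    by move=> x y; rewrite !ffunE => /Hi /fi.
  by move=> i j /fa /Ha; rewrite !ffunE.
by move=> f g E; apply/ffunP => i; move/ffunP: E => /(_ i); rewrite !ffunE => /Hi.
Qed.

Definition EJ (J : graph) : {set 'I_(gn J) * 'I_(gn J)} := [set ij | gadj ij.1 ij.2].

Definition Phi J G (f : {ffun 'I_(gn J) -> 'I_(gn G)}) :
  {set 'I_(gn G)} * {set 'I_(gn G) * 'I_(gn G)} :=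
  (f @: setT, [set (f ij.1, f ij.2) | ij in EJ J]).

Lemma Phi_copy J G f : f \in homs J G -> @is_copy J G (Phi f).1 (Phi f).2.
Proof.
move=> /homsP[fi fa]; apply/and3P; split.
- apply/subsetP => _ /imsetP[ij Hij ->]; rewrite inE /=; apply: fa.
  by rewrite inE in Hij.
- apply/subsetP => _ /imsetP[ij _ ->]; rewrite inE /=.
  by rewrite !imset_f ?inT.
- apply/existsP; exists f; apply/and3P; split.
  + by apply/injectiveP.
  + exact: eqxx.
  + apply/forallP => i; apply/forallP => j; apply/eqP; apply/idP/idP.
    * move=> Hij; apply/imsetP; exists (i, j) => //; by rewrite inE.
    * move=> /imsetP[[a b] Hab [Ea Eb]]; rewrite inE /= in Hab.
      by rewrite (fi _ _ Ea) (fi _ _ Eb).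
Qed.

Lemma copy_witness J G W F : @is_copy J G W F ->
  exists f, f \in homs J G /\ Phi f = (W, F).
Proof.
case/and3P => /subsetP HFe /subsetP HFW /existsP[f /and3P[/injectiveP fi /eqP fW /forallP fF]].
have fF' : forall i j, gadj i j = ((f i, f j) \in F).
  by move=> i j; move/forallP: (fF i) => /(_ j) /eqP.
exists f; split.
  apply/homsP; split=> // i j; rewrite fF' => /HFe; by rewrite inE.
rewrite /Phi fW; congr pair; apply/setP => e; apply/imsetP/idP.
  by move=> [ij]; rewrite inE fF' => H ->.
move=> He; have := HFW _ He; rewrite inE => /andP[].
rewrite -fW => /imsetP[a _ Ea] /imsetP[b _ Eb].
exists (a, b); last by case: e He Ea Eb => ? ? /= ? -> ->.
by rewrite inE /= fF' -Ea -Eb; case: e He {Ea Eb}.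
Qed.


Lemma aut_onto J (s : {ffun 'I_(gn J) -> 'I_(gn J)}) : s \in homs J J ->
  (forall y, exists x, y = s x) /\
  [set (s ij.1, s ij.2) | ij in EJ J] = EJ J.
Proof.
move=> /homsP[si sa]; split.
  move=> y; have: y \in s @: [set: 'I_(gn J)].
    have -> : s @: [set: 'I_(gn J)] = [set: 'I_(gn J)].
      by apply/eqP; rewrite eqEcard subsetT (card_imset _ si) leqnn.
    by rewrite inE.
  by case/imsetP => x _ ->; exists x.
apply/eqP; rewrite eqEcard card_imset; last first.
  by move=> [a b] [c d] /= [/si -> /si ->].
rewrite leqnn andbT; apply/subsetP => _ /imsetP[ij Hij ->].
by rewrite inE /=; apply: sa; rewrite inE in Hij.
Qed.

Lemma Phi_comp J G (f0 : {ffun 'I_(gn J) -> 'I_(gn G)}) s : s \in homs J J ->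
  Phi (fcomp f0 s) = Phi f0.
Proof.
move=> Hs; have [Hon HE] := aut_onto Hs.
rewrite /Phi; congr pair.
  apply/setP => y; apply/imsetP/imsetP => [[x _ ->]|[x _ ->]].
    by exists (s x); rewrite ?inT ?ffunE.
  by have [z ->] := Hon x; exists z; rewrite ?inT ?ffunE.
rewrite -[in RHS]HE -imset_comp; apply: eq_imset => ij /=; by rewrite !ffunE.
Qed.

Lemma fiber_card J G c : c \in [set WF | @is_copy J G WF.1 WF.2] ->
  #|[set f in homs J G | Phi f == c]| = hom J J.
Proof.
case: c => W F; rewrite inE => /copy_witness[f0 [Hf0 Ef0]].
have f0i : injective f0 by case/homsP: Hf0.
have -> : [set f in homs J G | Phi f == (W, F)] = fcomp f0 @: homs J J.
  apply/setP => f; rewrite inE; apply/andP/imsetP.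
    move=> [/homsP [fi fa] /eqP Ef].
    have Hx : forall i, exists j, f i = f0 j.
      move=> i; have : f i \in (Phi f).1 by rewrite /= imset_f ?inT.
      by rewrite Ef -Ef0 /= => /imsetP[j _ ->]; exists j.
    have [s' Hs'] := fin_all_exists Hx.
    exists [ffun i => s' i]; last by apply/ffunP => i; rewrite !ffunE.
    apply/homsP; split.
      by move=> i j; rewrite !ffunE => E; apply: fi; rewrite !Hs' E.
    move=> i j Hij; rewrite !ffunE.
    have : (f i, f j) \in (Phi f).2 by apply/imsetP; exists (i, j); rewrite ?inE.
    rewrite Ef -Ef0 => /imsetP[[a b]]; rewrite inE /= => Hab.
    by rewrite /= !Hs' => -[/f0i -> /f0i ->].
  move=> [s Hs ->]; split.
    case/homsP: Hf0 => _ f0a; case/homsP: Hs => si sa.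
    apply/homsP; split.
      by move=> x y; rewrite !ffunE => /f0i /si.
    by move=> x y /sa /f0a; rewrite !ffunE.
  by rewrite Phi_comp // Ef0.
rewrite card_in_imset // => s1 s2 _ _ E; apply/ffunP => i.
by move/ffunP: E => /(_ i); rewrite !ffunE => /f0i.
Qed.

Lemma ncopies_hom J G : Ncopies J G * hom J J = hom J G.
Proof.
have -> : hom J G = \sum_(f in homs J G) 1 by rewrite sum1_card.
rewrite (partition_big (@Phi J G) (fun WF => WF \in [set WF | @is_copy J G WF.1 WF.2])); last first.
  by move=> f Hf; rewrite inE; apply: Phi_copy.
rewrite /Ncopies -sum1_card big_distrl /=; apply: eq_bigr => c Hc.
rewrite mul1n -(fiber_card Hc) -sum1_card; apply: eq_bigl => f.
by rewrite inE.
Qed.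

Lemma hom_refl_gt0 J : (0 < hom J J)%N.
Proof.
rewrite /hom card_gt0; apply/set0Pn; exists [ffun i => i].
by apply/homsP; split=> [x y|x y]; rewrite !ffunE.
Qed.


Lemma split_l m n (a : 'I_m) : fintype.split (lshift n a) = inl a.
Proof. exact: (unsplitK (inl a)). Qed.
Lemma split_r m n (b : 'I_n) : fintype.split (rshift m b) = inr b.
Proof. exact: (unsplitK (inr b)). Qed.

Lemma gunion_ll A B a b : @gadj (gunion A B) (lshift (gn B) a) (lshift (gn B) b) = gadj a b.
Proof. by rewrite /= /gunion_adj !split_l. Qed.
Lemma gunion_rr A B a b : @gadj (gunion A B) (rshift (gn A) a) (rshift (gn A) b) = gadj a b.
Proof. by rewrite /= /gunion_adj !split_r. Qed.

Lemma dominatingP J v : dominating J v -> forall w, w != v -> gadj v w.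
Proof. by move=> /forallP H w Hw; move/implyP: (H w); apply. Qed.

Lemma hom_union J A B (v0 : 'I_(gn J)) : dominating J v0 ->
  hom J (gunion A B) = (hom J A + hom J B)%N.
Proof.
move=> Hv0.
pose lsh := @fcomp 'I_(gn J) 'I_(gn A) 'I_(gn (gunion A B)) (lshift (gn B)).
pose rsh := @fcomp 'I_(gn J) 'I_(gn B) 'I_(gn (gunion A B)) (@rshift (gn A) (gn B)).
have lshi : injective lsh.
  move=> f g E; apply/ffunP => i; move/ffunP: E => /(_ i).
  by rewrite !ffunE => /lshift_inj.
have rshi : injective rsh.
  move=> f g E; apply/ffunP => i; move/ffunP: E => /(_ i).
  by rewrite !ffunE => /rshift_inj.
rewrite /hom; have -> : homs J (gunion A B) = lsh @: homs J A :|: rsh @: homs J B.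
  apply/setP => f; apply/idP/idP.
    move=> /homsP[fi fa]; case E: (fintype.split (f v0)) => [a|b].
      have Hx : forall v, exists a', f v = lshift (gn B) a'.
        move=> v; case: (eqVneq v v0) => [->|Hv].
          by exists a; rewrite -(splitK (f v0)) E.
        have := fa _ _ (dominatingP Hv0 Hv); rewrite /= /gunion_adj E.
        case E2: (fintype.split (f v)) => [a'|b'] // _.
        by exists a'; rewrite -(splitK (f v)) E2.
      have [g Hg] := fin_all_exists Hx.
      rewrite inE; apply/orP; left; apply/imsetP; exists [ffun v => g v].
        apply/homsP; split.
          by move=> x y; rewrite !ffunE => E3; apply: fi; rewrite !Hg E3.
        move=> x y /fa; rewrite !Hg gunion_ll; by rewrite !ffunE.
      by apply/ffunP => v; rewrite !ffunE.
    have Hx : forall v, exists b', f v = rshift (gn A) b'.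
      move=> v; case: (eqVneq v v0) => [->|Hv].
        by exists b; rewrite -(splitK (f v0)) E.
      have := fa _ _ (dominatingP Hv0 Hv); rewrite /= /gunion_adj E.
      case E2: (fintype.split (f v)) => [a'|b'] // _.
      by exists b'; rewrite -(splitK (f v)) E2.
    have [g Hg] := fin_all_exists Hx.
    rewrite inE; apply/orP; right; apply/imsetP; exists [ffun v => g v].
      apply/homsP; split.
        by move=> x y; rewrite !ffunE => E3; apply: fi; rewrite !Hg E3.
      move=> x y /fa; rewrite !Hg gunion_rr; by rewrite !ffunE.
    by apply/ffunP => v; rewrite !ffunE.
  rewrite inE => /orP[] /imsetP[g /homsP[gi ga] ->]; apply/homsP; split.
  - by move=> x y; rewrite !ffunE => /lshift_inj /gi.
  - by move=> x y /ga; rewrite !ffunE gunion_ll.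
  - by move=> x y; rewrite !ffunE => /rshift_inj /gi.
  - by move=> x y /ga; rewrite !ffunE gunion_rr.
rewrite cardsU !card_imset //.
have -> : (lsh @: homs J A :&: rsh @: homs J B) = set0.
  apply/setP => f; rewrite !inE; apply/negbTE/negP => /andP[/imsetP[g _ ->] /imsetP[h _]].
  move/ffunP => /(_ v0); rewrite !ffunE => /eqP; by rewrite eq_lrshift.
by rewrite cards0 subn0.
Qed.

Lemma ncopies_union J A B (v0 : 'I_(gn J)) : dominating J v0 ->
  Ncopies J (gunion A B) = (Ncopies J A + Ncopies J B)%N.
Proof.
move=> Hv; apply/eqP; rewrite -(eqn_pmul2r (hom_refl_gt0 J)) mulnDl !ncopies_hom.
by rewrite (hom_union _ _ Hv).
Qed.

Lemma ncopies0 J G : (Ncopies J G == 0)%N = (hom J G == 0)%N.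
Proof.
by rewrite -ncopies_hom muln_eq0 (negbTE (lt0n_neq0 (hom_refl_gt0 J))) orbF.
Qed.

Lemma ncopies_mono J G1 G2 (phi : 'I_(gn G1) -> 'I_(gn G2)) :
  injective phi -> (forall x y, gadj x y -> gadj (phi x) (phi y)) ->
  (Ncopies J G1 <= Ncopies J G2)%N.
Proof.
move=> Hi Ha; rewrite -(leq_pmul2r (hom_refl_gt0 J)) !ncopies_hom.
exact: hom_mono Ha.
Qed.


Lemma card_lt_ord (N m : nat) : (m <= N)%N -> #|[set k : 'I_N | (k < m)%N]| = m.
Proof.
move=> le; have wi : injective (widen_ord le) by move=> a b /(congr1 val) /= E; apply: val_inj.
rewrite -[RHS]card_ord -(card_imset _ wi).
apply: eq_card => k; rewrite inE; apply/idP/imsetP.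
  by move=> Hk; exists (Ordinal Hk) => //; apply: val_inj.
by move=> [j _ ->] /=.
Qed.

Lemma card_rank n (P : pred 'I_n) u :
  (u <= #|[set v | P v]|)%N ->
  #|[set v | P v && (#|[set w | P w & (val w < val v)%N]| < u)%N]| = u.
Proof.
move=> Hu; set D := [set v | P v].
pose rk (v : 'I_n) := #|[set w | P w & (val w < val v)%N]|.
have rk_lt : forall v v', P v -> (val v < val v')%N -> (rk v < rk v')%N.
  move=> v v' Pv lt; apply: proper_card; rewrite properE; apply/andP; split.
    apply/subsetP => w; rewrite !inE => /andP[-> /= H]; exact: ltn_trans H lt.
  apply/subsetPn; exists v; first by rewrite inE Pv.
  by rewrite inE ltnn andbF.
have rk_inj : {in D &, injective rk}.
  move=> v v'; rewrite !inE => Pv Pv' E; apply: val_inj.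
  case: (ltngtP (val v) (val v')) => // H.
    by have := rk_lt _ _ Pv H; rewrite E ltnn.
  by have := rk_lt _ _ Pv' H; rewrite E ltnn.
have rk_D : forall v, v \in D -> (rk v < #|D|)%N.
  move=> v Hv; apply: proper_card; rewrite properE; apply/andP; split.
    by apply/subsetP => w; rewrite !inE => /andP[].
  apply/subsetPn; exists v => //; by rewrite inE ltnn andbF.
have rk_n : forall v, (rk v <= n)%N.
  by move=> v; rewrite -[X in (_ <= X)%N]card_ord; apply: max_card.
pose r (v : 'I_n) : 'I_n.+1 := inord (rk v).
have rE : forall v, (r v : nat) = rk v by move=> v; rewrite /r inordK // ltnS.
have r_inj : {in D &, injective r}.
  by move=> v v' Hv Hv' E; apply: rk_inj => //; rewrite -!rE E.
have Dn : (#|D| <= n.+1)%N by rewrite ltnW // ltnS -[X in (_ <= X)%N]card_ord max_card.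
have RD : r @: D = [set k : 'I_n.+1 | (k < #|D|)%N].
  apply/eqP; rewrite eqEcard card_in_imset // card_lt_ord // leqnn andbT.
  by apply/subsetP => _ /imsetP[v Hv ->]; rewrite inE rE rk_D.
set X := [set v | P v && _].
have XD : {subset X <= D} by move=> v; rewrite /X /D !inE => /andP[->].
rewrite -(card_in_imset (f:=r)); last by move=> v v' /XD Hv /XD Hv'; apply: r_inj.
rewrite -[RHS](@card_lt_ord n.+1 u); last exact: leq_trans Hu Dn.
apply: eq_card => k; apply/imsetP/idP.
  by move=> [v]; rewrite /X inE => /andP[_ H] ->; rewrite inE rE.
rewrite inE => Hk.
have : k \in r @: D by rewrite RD inE (leq_trans Hk Hu).
case/imsetP => v Hv Ek; exists v => //.
move: Hv; rewrite /X /D !inE => ->; by rewrite /= -/(rk v) -rE -Ek.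
Qed.


Definition CN (G : graph) (u : nat) (g : {ffun 'I_u -> 'I_(gn G)}) : {set 'I_(gn G)} :=
  [set v | [forall i, gadj (g i) v]].

Definition Xs (H : graph) (u : nat) : {set 'I_(gn H)} :=
  [set v | dominating H v &&
     (#|[set w | dominating H w & (val w < val v)%N]| < u)%N].

Lemma Hdown_adj H u (k k' : 'I_(gn (Hdown H u))) :
  gadj k k' = gadj (enum_val k : 'I_(gn H)) (enum_val k').
Proof. by []. Qed.

Lemma Kadj u (i j : 'I_(gn (K u))) : gadj i j = (i != j).
Proof. by []. Qed.

Section Decomp.
Variables (H : graph) (u : nat).
Hypothesis hu : (0 < u)%N.
Hypothesis huH : (u <= dom H)%N.

Lemma cardXs : #|Xs H u| = u.
Proof. by rewrite /Xs card_rank. Qed.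

Let i0 : 'I_u := Ordinal hu.
Let eX (i : 'I_u) : 'I_(gn H) := enum_val (cast_ord (esym cardXs) i).
Let eY (k : 'I_(gn (Hdown H u))) : 'I_(gn H) := @enum_val _ (mem (~: Xs H u)) k.

Lemma eX_inj : injective eX.
Proof. by move=> i j /enum_val_inj /cast_ord_inj. Qed.
Lemma eY_inj : injective eY.
Proof. by move=> i j /enum_val_inj. Qed.
Lemma eX_in i : eX i \in Xs H u.
Proof. exact: enum_valP. Qed.
Lemma eY_notin k : eY k \notin Xs H u.
Proof. by have := enum_valP k; rewrite inE. Qed.
Lemma eX_dom i : dominating H (eX i).
Proof. by have := eX_in i; rewrite inE => /andP[]. Qed.
Lemma eXY i k : eX i != eY k.
Proof. by apply/eqP => E; have := eY_notin k; rewrite -E eX_in. Qed.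
Lemma cover v : (exists i, v = eX i) \/ (exists k, v = eY k).
Proof.
case: (boolP (v \in Xs H u)) => Hv.
  left; exists (cast_ord cardXs (enum_rank_in Hv v)).
  by rewrite /eX cast_ordK enum_rankK_in.
have Hv' : v \in ~: Xs H u by rewrite inE.
right; exists (enum_rank_in Hv' v); by rewrite /eY enum_rankK_in.
Qed.

Lemma Hdown_adj' k k' : gadj k k' = gadj (eY k) (eY k').
Proof. by []. Qed.

Definition res G (f : {ffun 'I_(gn H) -> 'I_(gn G)}) : {ffun 'I_(gn (K u)) -> 'I_(gn G)} :=
  [ffun i => f (eX i)].
Definition rho G (f : {ffun 'I_(gn H) -> 'I_(gn G)}) : {ffun 'I_(gn (Hdown H u)) -> 'I_(gn G)} :=
  [ffun k => f (eY k)].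

Lemma res_hom G f : f \in homs H G -> res f \in homs (K u) G.
Proof.
move=> /homsP[fi fa]; apply/homsP; split.
  by move=> i j; rewrite !ffunE => /fi /eX_inj.
move=> i j; rewrite Kadj !ffunE => Hij; apply: fa.
apply: dominatingP; first exact: eX_dom.
by apply: contra Hij => /eqP/eX_inj ->.
Qed.

Lemma fiber_decomp G g : g \in homs (K u) G ->
  #|[set f in homs H G | res f == g]| =
  #|[set h in homs (Hdown H u) G | [forall k, h k \in CN g]]|.
Proof.
move=> /homsP[gi ga].
rewrite -(@card_in_imset _ _ (@rho G)); last first.
  move=> f1 f2; rewrite !inE => /andP[_ /eqP E1] /andP[_ /eqP E2] E.
  apply/ffunP => v; case: (cover v) => [[i ->]|[k ->]].
    by have := congr1 (fun f : {ffun _ -> _} => f i) E1; have := congr1 (fun f : {ffun _ -> _} => f i) E2; rewrite !ffunE => -> ->.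
  by have := congr1 (fun f : {ffun _ -> _} => f k) E; rewrite !ffunE.
apply: eq_card => h; apply/imsetP/idP.
  move=> [f]; rewrite inE => /andP[/homsP[fi fa] /eqP Ef] ->.
  rewrite inE; apply/andP; split.
    apply/homsP; split.
      by move=> k k'; rewrite !ffunE => /fi /eY_inj.
    by move=> k k'; rewrite Hdown_adj' !ffunE => /fa.
  apply/forallP => k; rewrite inE; apply/forallP => i; rewrite ffunE -Ef ffunE.
  apply: fa; apply: dominatingP; first exact: eX_dom.
  by rewrite eq_sym eXY.
rewrite inE => /andP[/homsP[hi ha] /forallP hC].
have hC' : forall k i, gadj (g i) (h k).
  by move=> k i; have := hC k; rewrite inE => /forallP.
have [f [fX fY]] : exists f : {ffun 'I_(gn H) -> 'I_(gn G)},
    (forall i, f (eX i) = g i) /\ (forall k, f (eY k) = h k).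
  exists [ffun v => if [pick i | eX i == v] is Some i then g i
          else if [pick k | eY k == v] is Some k then h k else g i0].
  split.
    move=> i; rewrite ffunE; case: pickP => [i' /eqP /eX_inj -> //|/(_ i)].
    by rewrite eqxx.
  move=> k; rewrite ffunE; case: pickP => [i' /eqP E|_].
    by have := eXY i' k; rewrite E eqxx.
  case: pickP => [k' /eqP /eY_inj -> //|/(_ k)].
  by rewrite eqxx.
exists f; last by apply/ffunP => k; rewrite !ffunE fY.
rewrite inE; apply/andP; split; last by apply/eqP/ffunP => i; rewrite ffunE fX.
apply/homsP; split.
  move=> v w; case: (cover v) => [[i ->]|[k ->]]; case: (cover w) => [[j ->]|[l ->]];
    rewrite ?fX ?fY.
  - by move/gi ->.
  - move=> E; have := hC' l i; rewrite E.
    by rewrite gadj_irr.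
  - move=> E; have := hC' k j; rewrite E.
    by rewrite gadj_irr.
  - by move/hi ->.
move=> v w; case: (cover v) => [[i ->]|[k ->]]; case: (cover w) => [[j ->]|[l ->]];
  rewrite ?fX ?fY => Hvw.
- apply: ga; rewrite Kadj; apply: contraTneq Hvw => ->; by rewrite gadj_irr.
- exact: hC'.
- by rewrite gadj_sym; apply: hC'.
- by apply: ha; rewrite Hdown_adj'.
Qed.

Lemma decomp G : hom H G =
  \sum_(g in homs (K u) G) #|[set h in homs (Hdown H u) G | [forall k, h k \in CN g]]|.
Proof.
have -> : hom H G = \sum_(f in homs H G) 1 by rewrite sum1_card.
rewrite (partition_big (@res G) (fun g => g \in homs (K u) G)); last first.
  by move=> f Hf; apply: res_hom.
apply: eq_bigr => g Hg; rewrite -fiber_decomp // -sum1_card.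
by apply: eq_bigl => f; rewrite inE.
Qed.

End Decomp.


Lemma induced_adj G (S : {set 'I_(gn G)}) (a b : 'I_(gn (@Defs.induced G S))) :
  gadj a b = gadj (@enum_val _ (mem S) a) (enum_val b).
Proof. by []. Qed.

Lemma bridge J G (S : {set 'I_(gn G)}) :
  #|[set h in homs J G | [forall k, h k \in S]]| = hom J (@Defs.induced G S).
Proof.
pose ev := (@enum_val _ (mem S) : 'I_(gn (@Defs.induced G S)) -> 'I_(gn G)).
have evi : injective ev by move=> a b /enum_val_inj.
rewrite /hom -(@card_imset _ _ (@fcomp _ _ _ ev) (homs J (@Defs.induced G S))); last first.
  move=> f1 f2 E; apply/ffunP => i; move/ffunP: E => /(_ i); rewrite !ffunE.
  exact: evi.
apply: eq_card => h; apply/idP/imsetP.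
  rewrite inE => /andP[/homsP[hi ha] /forallP hS].
  exists [ffun k => enum_rank_in (hS k) (h k)].
    apply/homsP; split.
      move=> x y; rewrite !ffunE => E.
      apply: hi; rewrite -(enum_rankK_in (hS x) (hS x)) -(enum_rankK_in (hS y) (hS y)).
      by rewrite E.
    move=> x y /ha; rewrite induced_adj !ffunE !enum_rankK_in //.
  by apply/ffunP => k; rewrite !ffunE /ev enum_rankK_in.
move=> [f /homsP[fi fa] ->]; rewrite inE; apply/andP; split.
  apply/homsP; split.
    by move=> x y; rewrite !ffunE => /evi /fi.
  by move=> x y /fa; rewrite induced_adj !ffunE.
by apply/forallP => k; rewrite ffunE; apply: enum_valP.
Qed.


Lemma ord_split m n (x : 'I_(m + n)) :
  (exists i, x = lshift n i) \/ (exists k, x = rshift m k).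
Proof.
rewrite -(splitK x); case: (fintype.split x) => [i|k]; [left; exists i|right; exists k]; by [].
Qed.

Lemma join_map G u m (g : {ffun 'I_u -> 'I_(gn G)}) (h : {ffun 'I_m -> 'I_(gn G)}) :
  g \in homs (K u) G -> injective h -> (forall k, h k \in CN g) ->
  exists c : {ffun 'I_(u + m) -> 'I_(gn G)}, [/\ injective c,
    (forall i, c (lshift m i) = g i) & (forall k, c (rshift u k) = h k)].
Proof.
move=> /homsP[gi ga] hi hC.
have hC' : forall k i, gadj (g i) (h k).
  by move=> k i; have := hC k; rewrite inE => /forallP.
exists [ffun x => match fintype.split x with inl i => g i | inr k => h k end].
split; last first.
- by move=> k; rewrite ffunE split_r.
- by move=> i; rewrite ffunE split_l.
move=> x y; rewrite !ffunE.
case: (ord_split x) => [[i ->]|[k ->]]; case: (ord_split y) => [[j ->]|[l ->]];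
  rewrite ?split_l ?split_r.
- by move/gi ->.
- by move=> E; have := hC' l i; rewrite E gadj_irr.
- by move=> E; have := hC' k j; rewrite E gadj_irr.
- by move/hi ->.
Qed.

Lemma lshift_lt m n (i : 'I_m) : (val (lshift n i) < m)%N.
Proof. by rewrite /= ltn_ord. Qed.
Lemma rshift_ge m n (k : 'I_n) : (val (rshift m k) < m)%N = false.
Proof. by rewrite /= ltnNge leq_addr. Qed.

Lemma KI_adj u m (x y : 'I_(gn (KI u m))) :
  gadj x y = (x != y) && ((val x < u)%N || (val y < u)%N).
Proof. by []. Qed.

Lemma CN_small G u Delta g : g \in homs (K u) G ->
  Ncopies (KI u Delta.+1) G = 0%N -> (#|CN g| <= Delta)%N.
Proof.
move=> Hg H0; rewrite leqNgt; apply/negP => Hlt.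
have Hg' := Hg; case/homsP: Hg' => gi ga.
pose e := [ffun k : 'I_Delta.+1 => @enum_val _ (mem (CN g)) (widen_ord Hlt k)].
have ei : injective e.
  move=> a b; rewrite !ffunE => /enum_val_inj /(congr1 val) /= E; exact: val_inj.
have eC : forall k, e k \in CN g by move=> k; rewrite ffunE; apply: enum_valP.
have [c [ci cl cr]] := join_map Hg ei eC.
have hC' : forall k i, gadj (g i) (e k).
  by move=> k i; have := eC k; rewrite inE => /forallP.
move/eqP: H0; rewrite ncopies0 /hom cards_eq0 => /eqP/setP/(_ c).
rewrite finset.in_set0 => /negbT/negP; apply.
apply/homsP; split; first exact: ci.
move=> x y; rewrite KI_adj.
case: (ord_split x) => [[i ->]|[k ->]]; case: (ord_split y) => [[j ->]|[l ->]];
  rewrite ?cl ?cr ?lshift_lt ?rshift_ge //=.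
- rewrite (inj_eq (@lshift_inj _ _)) andbT => Hij; exact: ga.
- by rewrite andbT => _; rewrite gadj_sym; apply: hC'.
- by rewrite andbF.
Qed.


Lemma hom_pos_ncopies J G (f : {ffun 'I_(gn J) -> 'I_(gn G)}) :
  f \in homs J G -> Ncopies J G <> 0%N.
Proof.
move=> Hf /eqP; rewrite ncopies0 /hom cards_eq0 => /eqP/setP/(_ f).
by rewrite Hf finset.in_set0.
Qed.

Lemma CN_clique_free G u r g : g \in homs (K u) G ->
  Ncopies (K (u + r.+1)) G = 0%N -> Ncopies (K r.+1) (@Defs.induced G (CN g)) = 0%N.
Proof.
move=> Hg H0; apply/eqP; rewrite ncopies0 -bridge cards_eq0; apply/eqP/setP => h.
rewrite finset.in_set0 inE; apply/negbTE/negP => /andP[/homsP[hi ha] /forallP hC].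
have Hg' := Hg; case/homsP: Hg' => gi ga.
have [c [ci cl cr]] := join_map Hg hi hC.
have hC' : forall k i, gadj (g i) (h k).
  by move=> k i; have := hC k; rewrite inE => /forallP.
apply: (@hom_pos_ncopies (K (u + r.+1)) G c) H0; apply/homsP; split=> // x y.
rewrite Kadj.
case: (ord_split x) => [[i ->]|[k ->]]; case: (ord_split y) => [[j ->]|[l ->]];
  rewrite ?cl ?cr.
- by rewrite (inj_eq (@lshift_inj _ _)) => Hij; apply: ga.
- by move=> _; apply: hC'.
- by move=> _; rewrite gadj_sym; apply: hC'.
- by rewrite (inj_eq (@rshift_inj _ _)) => Hkl; apply: ha.
Qed.

Lemma T_mono r n m : (n <= m)%N -> forall J, (hom J (T r n) <= hom J (T r m))%N.
Proof.
move=> le J; apply: (@hom_mono J (T r n) (T r m) (widen_ord le)).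
  by move=> a b /(congr1 val) /= E; apply: val_inj.
by [].
Qed.

Section Upper.
Variables (H : graph) (u Delta omega w0 : nat).
Hypothesis hu : (0 < u)%N.
Hypothesis huH : (u <= dom H)%N.
Hypothesis Hw0 : is_omega0 (Hdown H u) w0.
Hypothesis hw : (w0 + u <= omega)%N.

Let r := (omega - u)%N.
Let B := hom (Hdown H u) (T r Delta).

Lemma per_g_upper G g : g \in homs (K u) G ->
  Ncopies (KI u Delta.+1) G = 0%N -> Ncopies (K omega.+1) G = 0%N ->
  (hom (Hdown H u) (@Defs.induced G (CN g)) <= B)%N.
Proof.
move=> Hg HKI HK.
have Hn := CN_small Hg HKI.
have Er : omega.+1 = (u + r.+1)%N.
  rewrite /r; move: hw; clear; lia.
rewrite Er in HK.
have Hfree := CN_clique_free Hg HK.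
case: (posnP #|CN g|) => Hc.
  apply: (@hom_mono _ (@Defs.induced G (CN g)) (T r Delta) (widen_ord Hn)).
    by move=> a b /(congr1 val) /= E; apply: val_inj.
  by move=> [a Ha]; exfalso; move: Ha; rewrite /= Hc.
rewrite /B; apply: (leq_trans _ (@T_mono r _ _ Hn (Hdown H u))).
case: Hw0 => _ Htp _.
have Hle : (w0 <= r)%N.
  rewrite /r; move: hw; clear; lia.
have H1 := Htp r Hle (@Defs.induced G (CN g)) Hc Hfree.
by rewrite -(leq_pmul2r (hom_refl_gt0 (Hdown H u))) !ncopies_hom in H1.
Qed.

Lemma upper G : Ncopies (KI u Delta.+1) G = 0%N -> Ncopies (K omega.+1) G = 0%N ->
  (hom H G <= hom (K u) G * B)%N.
Proof.
move=> HKI HK; rewrite (decomp hu huH) /hom -sum_nat_const.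
apply: leq_sum => g Hg; rewrite bridge; exact: per_g_upper.
Qed.

End Upper.


Lemma T_adj r n (i j : 'I_(gn (T r n))) : gadj i j = (val i %% r != val j %% r)%N.
Proof. by []. Qed.

Section Lower.
Variables (u Delta omega : nat).
Hypothesis hr : (0 < omega - u)%N.
Hypothesis hdiv : (omega - u %| Delta)%N.
Let r := (omega - u)%N.
Let m := (Delta %/ r)%N.
Let L := T omega (omega * m).

Lemma omega_pos : (0 < omega)%N.
Proof. move: hr; rewrite /r; lia. Qed.

Lemma Delta_eq : Delta = (m * r)%N.
Proof. by rewrite /m divnK. Qed.

Lemma L_resid_inj g : g \in homs (K u) L ->
  injective (fun i : 'I_u => (Ordinal (ltn_pmod (g i) omega_pos) : 'I_omega)).
Proof.
move=> /homsP[gi ga] i j /(congr1 val) /= E; apply/eqP; apply: contraT => Hij.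
have := ga i j Hij; by rewrite T_adj E eqxx.
Qed.

Lemma phi_exists g : g \in homs (K u) L ->
  exists phi : 'I_Delta -> 'I_(gn L),
  [/\ injective phi, (forall x y, @gadj (T r Delta) x y -> gadj (phi x) (phi y))
    & forall k, phi k \in CN g].
Proof.
move=> Hg.
pose rg := (fun i : 'I_u => (Ordinal (ltn_pmod (g i) omega_pos) : 'I_omega)).
have rgi : injective rg := L_resid_inj Hg.
pose Q := ~: (rg @: [set: 'I_u]).
have cQ : #|Q| = r.
  have E1 : #|rg @: [set: 'I_u]| = u by rewrite card_imset // cardsE card_ord.
  have E2 := cardsC (rg @: [set: 'I_u]); rewrite E1 card_ord -/Q in E2.
  rewrite /r; lia.
have rpos : (0 < r)%N by [].
pose qe (k : 'I_Delta) : 'I_omega :=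
  @enum_val _ (mem Q) (cast_ord (esym cQ) (Ordinal (ltn_pmod k rpos))).
have qeQ : forall k, qe k \in Q by move=> k; apply: enum_valP.
have qe_eq : forall k k' : 'I_Delta, qe k = qe k' -> (k %% r = k' %% r)%N.
  by move=> k k' /enum_val_inj /cast_ord_inj /(congr1 val).
have qe_neq : forall k k' : 'I_Delta, (k %% r != k' %% r)%N -> qe k != qe k'.
  by move=> k k' H; apply: contra H => /eqP /qe_eq ->.
have bnd : forall k : 'I_Delta, ((k %/ r) * omega + qe k < omega * m)%N.
  move=> k; have hk : (k %/ r < m)%N.
    by rewrite ltn_divLR // -Delta_eq.
  have hq : (qe k < omega)%N by [].
  nia.
pose phi (k : 'I_Delta) : 'I_(gn L) := Ordinal (bnd k).
have phimod : forall k, (phi k %% omega = qe k)%N.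
  by move=> k; rewrite /= modnMDl modn_small.
have phidiv : forall k, (phi k %/ omega = k %/ r)%N.
  by move=> k; rewrite /= divnMDl ?omega_pos // (divn_small (ltn_ord (qe k))) addn0.
exists phi; split.
- move=> k k' E.
  have E1 : qe k = qe k' by apply: val_inj => /=; rewrite -!phimod E.
  have E2 : (k %/ r = k' %/ r)%N by rewrite -!phidiv E.
  apply: val_inj; rewrite /= (divn_eq k r) (divn_eq k' r) E2 (qe_eq _ _ E1) //.
- move=> x y; rewrite !T_adj !phimod => Hxy.
  exact: (qe_neq _ _ Hxy).
- move=> k; rewrite inE; apply/forallP => i; rewrite T_adj phimod.
  have := qeQ k; rewrite /Q inE; apply: contra => /eqP E.
  have -> : qe k = rg i by apply: val_inj => /=; rewrite -E.
  by rewrite imset_f.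
Qed.

Lemma lower_g H g : g \in homs (K u) L ->
  (hom H (T r Delta) <= hom H (@Defs.induced L (CN g)))%N.
Proof.
move=> Hg; have [phi [phii phia phiC]] := phi_exists Hg.
rewrite -bridge /hom -(@card_imset _ _ (@fcomp _ _ _ phi) (homs H (T r Delta))); last first.
  move=> f1 f2 E; apply/ffunP => i; move/ffunP: E => /(_ i); rewrite !ffunE.
  exact: phii.
apply: subset_leq_card; apply/subsetP => _ /imsetP[f /homsP[fi fa] ->].
rewrite inE; apply/andP; split.
  apply/homsP; split.
    by move=> x y; rewrite !ffunE => /phii /fi.
  by move=> x y /fa /phia; rewrite !ffunE.
by apply/forallP => k; rewrite ffunE.
Qed.

Lemma lower H : (0 < u)%N -> (u <= dom H)%N ->
  (hom (K u) L * hom (Hdown H u) (T r Delta) <= hom H L)%N.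
Proof.
move=> hu huH; rewrite (decomp hu huH) /hom -sum_nat_const.
apply: leq_sum => g Hg; rewrite bridge; exact: lower_g.
Qed.

End Lower.


Lemma hom_K0 J (v0 : 'I_(gn J)) : hom J (K 0) = 0%N.
Proof.
apply/eqP; rewrite /hom cards_eq0; apply/eqP/setP => f.
by rewrite finset.in_set0; case: (f v0).
Qed.

Lemma ncopies_K0 J (v0 : 'I_(gn J)) : Ncopies J (K 0) = 0%N.
Proof. by apply/eqP; rewrite ncopies0 (hom_K0 v0). Qed.

Lemma ncopies_copies J L (v0 : 'I_(gn J)) : dominating J v0 ->
  forall q, Ncopies J (copies q L) = (q * Ncopies J L)%N.
Proof.
move=> Hv; elim=> [|q IH]; first by rewrite mul0n /= (ncopies_K0 v0).
by rewrite /= (ncopies_union _ _ Hv) IH mulSn addnC.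
Qed.

Lemma ncopies_self J : Ncopies J J = 1%N.
Proof.
apply/eqP; rewrite -(eqn_pmul2r (hom_refl_gt0 J)) ncopies_hom mul1n //.
Qed.

Lemma dom_K n : dominating (K n.+1) ord0.
Proof. by apply/forallP => w; apply/implyP; rewrite Kadj eq_sym. Qed.

Lemma dom_Ku u (hu : (0 < u)%N) : dominating (K u) (Ordinal hu).
Proof. by apply/forallP => w; apply/implyP; rewrite Kadj eq_sym. Qed.

Lemma dom_KI u m (hu : (0 < u)%N) :
  dominating (KI u m) (Ordinal (leq_trans hu (leq_addr m u))).
Proof. by apply/forallP => w; apply/implyP; rewrite KI_adj eq_sym => ->; rewrite /= hu. Qed.

Lemma dom_ex H : (0 < dom H)%N -> exists v0, dominating H v0.
Proof.
rewrite /dom card_gt0 => /set0Pn[v]; rewrite inE => Hv; by exists v.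
Qed.

Lemma no_inj_hom J G : (gn G < gn J)%N -> Ncopies J G = 0%N.
Proof.
move=> lt; apply/eqP; rewrite ncopies0 /hom cards_eq0; apply/eqP/setP => f.
rewrite finset.in_set0; apply/negbTE/negP => /homsP[fi _].
have := leq_card f fi; rewrite !card_ord leqNgt; by rewrite lt.
Qed.

Lemma T_clique_free omega n : (0 < omega)%N -> Ncopies (K omega.+1) (T omega n) = 0%N.
Proof.
move=> Hpos; apply/eqP; rewrite ncopies0 /hom cards_eq0; apply/eqP/setP => f.
rewrite finset.in_set0; apply/negbTE/negP => /homsP[fi fa].
pose rg := fun i : 'I_omega.+1 => (Ordinal (ltn_pmod (f i) Hpos) : 'I_omega).
have : injective rg.
  move=> i j /(congr1 val) /= E; apply/eqP; apply: contraT => Hij.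
  by have := fa i j Hij; rewrite T_adj E eqxx.
by move/(leq_card rg); rewrite !card_ord ltnn.
Qed.


Section LFree.
Variables (u Delta omega : nat).
Hypothesis hu : (0 < u)%N.
Hypothesis hr : (0 < omega - u)%N.
Hypothesis hdiv : (omega - u %| Delta)%N.
Let r := (omega - u)%N.
Let m := (Delta %/ r)%N.
Let L := T omega (omega * m).

Lemma CN_L_le g : g \in homs (K u) L -> (#|CN g| <= Delta)%N.
Proof.
move=> Hg; have Hg' := Hg; case/homsP: Hg' => gi ga.
have opos : (0 < omega)%N by move: hr; lia.
pose rg := (fun i : 'I_u => (Ordinal (ltn_pmod (g i) opos) : 'I_omega)).
have rgi : injective rg.
  move=> i j /(congr1 val) /= E; apply/eqP; apply: contraT => Hij.
  by have := ga i j Hij; rewrite T_adj E eqxx.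
pose Q := ~: (rg @: [set: 'I_u]).
have cQ : #|Q| = r.
  have E1 : #|rg @: [set: 'I_u]| = u by rewrite card_imset // cardsE card_ord.
  have E2 := cardsC (rg @: [set: 'I_u]); rewrite E1 card_ord -/Q in E2.
  rewrite /r; lia.
have bnd : forall v : 'I_(gn L), (v %/ omega < m)%N.
  by move=> v; rewrite ltn_divLR // mulnC; apply: ltn_ord.
pose psi (v : 'I_(gn L)) : 'I_m * 'I_omega := (Ordinal (bnd v), Ordinal (ltn_pmod v opos)).
have psii : injective psi.
  move=> v w E; have /= E1 := congr1 (fun p => val p.1) E.
  have /= E2 := congr1 (fun p => val p.2) E.
  by apply: val_inj; rewrite /= (divn_eq v omega) (divn_eq w omega) E1 E2.
rewrite -(card_imset _ psii).
apply: (@leq_trans #|finset.setX [set: 'I_m] Q|).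
  apply: subset_leq_card; apply/subsetP => _ /imsetP[v Hv ->].
  rewrite in_setX inE /= /Q inE; apply/imsetP => -[i _ /(congr1 val) /= E].
  move: Hv; rewrite inE => /forallP /(_ i); by rewrite T_adj E eqxx.
by rewrite cardsX cardsE card_ord cQ /m /r divnK.
Qed.

Lemma KI_free_L : Ncopies (KI u Delta.+1) L = 0%N.
Proof.
apply/eqP; rewrite ncopies0 /hom cards_eq0; apply/eqP/setP => f.
rewrite finset.in_set0; apply/negbTE/negP => /homsP[fi fa].
pose g : {ffun 'I_(gn (K u)) -> 'I_(gn L)} := [ffun i => f (lshift Delta.+1 i)].
have Hg : g \in homs (K u) L.
  apply/homsP; split.
    by move=> i j; rewrite !ffunE => /fi /lshift_inj.
  move=> i j; rewrite Kadj !ffunE => Hij; apply: fa.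
  by rewrite KI_adj (inj_eq (@lshift_inj _ _)) Hij /= ltn_ord.
pose e := fun k : 'I_Delta.+1 => f (rshift u k).
have ei : injective e by move=> a b /fi /rshift_inj.
have eC : forall k, e k \in CN g.
  move=> k; rewrite inE; apply/forallP => i; rewrite ffunE; apply: fa.
  by rewrite KI_adj eq_lrshift /= ltn_ord.
have := CN_L_le Hg.
have : (#|e @: [set: 'I_Delta.+1]| <= #|CN g|)%N.
  by apply: subset_leq_card; apply/subsetP => _ /imsetP[k _ ->].
rewrite card_imset // cardsE card_ord => H1 H2.
by have := leq_trans H1 H2; rewrite ltnn.
Qed.

End LFree.

Local Open Scope classical_set_scope.
Local Open Scope ring_scope.

Lemma boundA (R : realType) (x N0 NL kL p q : R) : 0 < NL -> 0 < kL -> 1 <= q ->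
  q * NL <= N0 -> N0 <= x -> x * kL <= p * NL -> p < (q + 1) * kL -> 0 < p ->
  `|1 - x / N0| <= 2 * kL / p.
Proof.
move=> NL0 kL0 q1 hN0 hx hxk hp p0.
have N00 : 0 < N0 by nra.
have h1 : 1 - x / N0 = - ((x - N0) / N0) by field; lra.
rewrite h1 normrN ger0_norm; last by apply: divr_ge0; lra.
rewrite ler_pdivrMr // mulrAC ler_pdivlMr //.
have h2 : (x - N0) * kL <= NL * (p - q * kL) by nra.
have h3 : p - q * kL < kL by nra.
have h4 : (x - N0) < NL by nra.
have h5 : (x - N0) * p <= NL * p by nra.
have h6 : NL * p <= NL * ((q + 1) * kL) by nra.
have NLk : 0 < NL * kL by nra.
have h7 : NL * ((q + 1) * kL) <= 2 * kL * (q * NL).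
  have -> : NL * ((q + 1) * kL) = (NL * kL) * (q + 1) by ring.
  have -> : 2 * kL * (q * NL) = (NL * kL) * (2 * q) by ring.
  rewrite ler_pM2l //; lra.
have h8 : 2 * kL * (q * NL) <= 2 * kL * N0 by nra.
lra.
Qed.

Lemma boundB (R : realType) (x N0 NL kL p q : R) : 0 < NL -> 0 < kL ->
  q * NL <= N0 -> N0 <= x -> x * kL <= p * NL -> p < (q + 1) * kL -> 0 < p ->
  `|1 - x / (NL / kL * p)| <= 2 * kL / p.
Proof.
move=> NL0 kL0 hN0 hx hxk hp p0.
have h1 : 1 - x / (NL / kL * p) = (NL * p - x * kL) / (NL * p).
  by field; rewrite (gt_eqF p0) (gt_eqF NL0) (gt_eqF kL0).
rewrite h1 ger0_norm; last by apply: divr_ge0; nra.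
rewrite ler_pdivrMr; last by nra.
rewrite mulrAC ler_pdivlMr //.
have g1 : q * NL * kL <= x * kL by nra.
have g2 : NL * p <= NL * ((q + 1) * kL) by nra.
have g3 : NL * p - x * kL <= NL * kL by nra.
have g4 : (NL * p - x * kL) * p <= NL * kL * p by nra.
have g5 : 0 <= NL * kL * p by nra.
lra.
Qed.

Lemma key_cvg (R : realType) (f : nat -> \bar R) (c : R) : 0 < c ->
  (\forall p \near \oo, exists y : R, f p = y%:E /\ `|1 - y| <= c / p%:R) ->
  f @ \oo --> 1%:E.
Proof.
move=> c0 Hf; apply: cvg_EFin.
  by apply: filterS Hf => p [y [-> _]].
apply/cvgrPdist_le => e e0.
apply: filterS2 Hf (nbhs_infty_ger (c / e)) => p [y [E Hy]] Hp.
rewrite /= E /=; apply: (le_trans Hy).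
have ce : 0 < c / e by apply: divr_gt0.
have pp : 0 < (p%:R : R) by apply: lt_le_trans Hp.
rewrite ler_pdivrMr // mulrC; by rewrite ler_pdivrMr in Hp.
Qed.

Unset Implicit Arguments.

Theorem mainTheorem11 (R : realType) (u : nat) (H : graph) (Delta omega : nat) :
  (1 <= u)%N -> (u <= dom H)%N ->
  (exists w0, is_omega0 (Hdown H u) w0 /\ (w0 + u <= omega)%N) ->
  (omega <= Delta)%N -> (omega - u %| Delta)%N ->
  let L := T omega (omega * (Delta %/ (omega - u))) in
  let kL := kcl u L in
  let ex := fun p => ex_u R u p H [:: KI u Delta.+1; K omega.+1] in
  ((0 < Ncopies H L)%N ->
     (fun p : nat => (ex p * (((Ncopies H
          (gunion (copies (p %/ kL) L) (copies (p %% kL) (K u))))%:R : R)^-1)%:E)%E)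
       @ \oo --> (1%:E : \bar R))
  /\ ((0 < Ncopies H L)%N ->
     (fun p : nat => (ex p *
          (((Ncopies H L)%:R / kL%:R * p%:R : R)^-1)%:E)%E)
       @ \oo --> (1%:E : \bar R))
  /\ (forall p : nat, (1 <= p)%N -> (kL %| p)%N ->
        ex p = ((Ncopies H (copies (p %/ kL) L))%:R : R)%:E).
Proof.
move=> hu huH [w0 [Hw0 hw]] hOD hdiv L kL ex.
have w0pos : (0 < w0)%N by case: Hw0.
have hr : (0 < omega - u)%N by move: hw w0pos; lia.
have opos : (0 < omega)%N by move: hr; lia.
have [v0 Hv0] := dom_ex (leq_trans hu huH).
have Hbound : forall G, Ncopies (KI u Delta.+1) G = 0%N -> Ncopies (K omega.+1) G = 0%N ->
    (Ncopies H G * kL <= kcl u G * Ncopies H L)%N.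
  move=> G HKI HK.
  have U := upper hu huH Hw0 hw HKI HK.
  have Lo := lower hr hdiv hu huH.
  rewrite -[hom H G]ncopies_hom -[hom (K u) G]ncopies_hom in U.
  rewrite -[hom H L]ncopies_hom -[hom (K u) L]ncopies_hom in Lo.
  rewrite /kL /kcl -/L.
  move: U Lo; set B := hom (Hdown H u) _; set aH := hom H H; set aK := hom (K u) (K u).
  set NG := Ncopies H G; set NL := Ncopies H L; set kG := Ncopies (K u) G;
  set kl := Ncopies (K u) L => U Lo.
  have aH0 : (0 < aH)%N by apply: hom_refl_gt0.
  have aK0 : (0 < aK)%N by apply: hom_refl_gt0.
  case: (posnP B) => B0.
    move: U; rewrite B0 muln0 leqn0 muln_eq0 (negbTE (lt0n_neq0 aH0)) orbF.
    by move/eqP ->.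
  have P0 : (0 < aH * aK * B)%N by rewrite !muln_gt0 aH0 aK0 B0.
  rewrite -(leq_pmul2r P0).
  have h1 := leq_mul U (leqnn (kl * aK * B)).
  have h2 := leq_mul (leqnn (kG * aK * B)) Lo.
  have e1 : (NG * kl * (aH * aK * B) = NG * aH * (kl * aK * B))%N by ring.
  have e2 : (kG * NL * (aH * aK * B) = kG * aK * B * (NL * aH))%N by ring.
  by rewrite e1 e2; apply: leq_trans h1 h2.
have dKu := dom_Ku hu.
have dKI := dom_KI Delta.+1 hu.
have dK := dom_K omega.
have fKI_L : Ncopies (KI u Delta.+1) L = 0%N := KI_free_L hu hr hdiv.
have fK_L : Ncopies (K omega.+1) L = 0%N := T_clique_free _ opos.
have fKI_Ku : Ncopies (KI u Delta.+1) (K u) = 0%N.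
  by apply: no_inj_hom => /=; rewrite -addn1 leq_add2l.
have fK_Ku : Ncopies (K omega.+1) (K u) = 0%N.
  by apply: no_inj_hom => /=; move: hw; lia.
have kKu : kcl u (K u) = 1%N by apply: ncopies_self.
have mpos : (0 < Delta %/ (omega - u))%N.
  by rewrite divn_gt0 //; move: hOD; lia.
have kLpos : (0 < kL)%N.
  have bnd : forall i : 'I_u, (i < omega * (Delta %/ (omega - u)))%N.
    move=> i; apply: (leq_trans (ltn_ord i)); move: hw mpos; nia.
  rewrite lt0n; apply/eqP.
  apply: (@hom_pos_ncopies (K u) L [ffun i => Ordinal (bnd i)]).
  apply/homsP; split.
    by move=> i j; rewrite !ffunE => /(congr1 val) /= E; apply: val_inj.
  move=> i j; rewrite Kadj T_adj !ffunE /= !modn_small //; try (apply: (leq_trans (ltn_ord _)); move: hw; lia).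
have cnt : forall F (w : 'I_(gn F)), dominating F w -> forall q r',
    Ncopies F (gunion (copies q L) (copies r' (K u))) = (q * Ncopies F L + r' * Ncopies F (K u))%N.
  move=> F w Hw q r'; by rewrite (ncopies_union _ _ Hw) !(ncopies_copies _ Hw).
have ex_lb : forall G p, kcl u G = p -> Ncopies (KI u Delta.+1) G = 0%N ->
    Ncopies (K omega.+1) G = 0%N -> (((Ncopies H G)%:R : R)%:E <= ex p)%E.
  move=> G p HG HKI HK; rewrite /ex /ex_u; apply: ereal_sup_ubound.
  exists G => //; split=> // F [->|[->|[]]] //.
have ex_ub : forall p, (ex p <= ((p * Ncopies H L)%:R / kL%:R : R)%:E)%E.
  move=> p; rewrite /ex /ex_u; apply/ereal_supP => _ [G [HG HF] <-].
  have HKI : Ncopies (KI u Delta.+1) G = 0%N by apply: HF; left.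
  have HK : Ncopies (K omega.+1) G = 0%N by apply: HF; right; left.
  have := Hbound G HKI HK; rewrite HG => Hb.
  rewrite lee_fin ler_pdivlMr ?ltr0n // -natrM ler_nat //.
have G0mem : forall p, let G0 := gunion (copies (p %/ kL) L) (copies (p %% kL) (K u)) in
    [/\ kcl u G0 = p, Ncopies (KI u Delta.+1) G0 = 0%N & Ncopies (K omega.+1) G0 = 0%N].
  move=> p G0; split.
  - rewrite /kcl /G0 (cnt _ _ dKu); change (Ncopies (K u) L) with kL.
    by move: kKu; rewrite /kcl => ->; rewrite muln1 -divn_eq.
  - by rewrite /G0 (cnt _ _ dKI) fKI_L fKI_Ku !muln0.
  - by rewrite /G0 (cnt _ _ dK) fK_L fK_Ku !muln0.
have fin : forall p, exists x : R, [/\ ex p = x%:E,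
    ((Ncopies H (gunion (copies (p %/ kL) L) (copies (p %% kL) (K u))))%:R <= x) &
    x * kL%:R <= (p * Ncopies H L)%:R].
  move=> p; have [h1 h2 h3] := G0mem p.
  have lo := ex_lb _ _ h1 h2 h3; have up := ex_ub p.
  move: lo up; case: (ex p) => [x | | ] //= lo up.
  exists x; split=> //.
  by move: up; rewrite lee_fin ler_pdivlMr ?ltr0n.
have qfacts : forall p, (kL <= p)%N ->
    [/\ (1 <= p %/ kL)%N, (p < (p %/ kL).+1 * kL)%N & (0 < p)%N].
  move=> p Hp; split.
  - by rewrite divn_gt0.
  - exact: ltn_ceil.
  - exact: leq_trans kLpos Hp.
have N0lb : forall p, (p %/ kL * Ncopies H L <=
     Ncopies H (gunion (copies (p %/ kL) L) (copies (p %% kL) (K u))))%N.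
  by move=> p; rewrite (cnt _ _ Hv0) leq_addr.
have c0 : (0 : R) < 2 * kL%:R by rewrite mulr_gt0 ?ltr0n.
split; [|split].
- move=> NLpos; apply: (key_cvg c0); apply: filterS (nbhs_infty_ge kL) => p Hp.
  have [q1 qlt p0] := qfacts p Hp.
  have [x [Ex hlo hup]] := fin p.
  set N0 := Ncopies H _ in hlo *.
  exists (x / N0%:R); split; first by rewrite Ex -EFinM.
  apply: (@boundA R x N0%:R (Ncopies H L)%:R kL%:R p%:R (p %/ kL)%:R).
  + by rewrite ltr0n.
  + by rewrite ltr0n.
  + by rewrite ler1n.
  + by rewrite -natrM ler_nat N0lb.
  + exact: hlo.
  + by rewrite -natrM.
  + by rewrite natr1 -natrM ltr_nat.
  + by rewrite ltr0n.
- move=> NLpos; apply: (key_cvg c0); apply: filterS (nbhs_infty_ge kL) => p Hp.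
  have [q1 qlt p0] := qfacts p Hp.
  have [x [Ex hlo hup]] := fin p.
  set N0 := Ncopies H (gunion _ _) in hlo.
  exists (x / ((Ncopies H L)%:R / kL%:R * p%:R)); split; first by rewrite Ex -EFinM.
  apply: (@boundB R x N0%:R (Ncopies H L)%:R kL%:R p%:R (p %/ kL)%:R).
  + by rewrite ltr0n.
  + by rewrite ltr0n.
  + by rewrite -natrM ler_nat N0lb.
  + exact: hlo.
  + by rewrite -natrM.
  + by rewrite natr1 -natrM ltr_nat.
  + by rewrite ltr0n.
- move=> p p1 dvd.
  have e1 : Ncopies H (copies (p %/ kL) L) = (p %/ kL * Ncopies H L)%N.
    exact: (ncopies_copies _ Hv0).
  apply/eqP; rewrite eq_le; apply/andP; split.
    apply: (le_trans (ex_ub p)); rewrite lee_fin e1.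
    set q := (p %/ kL)%N; have Ep : p = (q * kL)%N by rewrite divnK.
    by rewrite {1}Ep mulnAC natrM mulfK // pnatr_eq0 -lt0n.
  apply: ex_lb.
  - by rewrite /kcl (ncopies_copies _ dKu) -/(kcl u L) -/kL divnK.
  - by rewrite (ncopies_copies _ dKI) fKI_L muln0.
  - by rewrite (ncopies_copies _ dK) fK_L muln0.
Qed.
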